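(* Let $n\ge1$ and $0\le k<n$. Then: (a) $|\mathbf{I}_{n,k}(001)|=|\mathbf{I}_{n-1}(001)|-\sum_{j<k}|\mathbf{I}_{n-2,j}(001)|$. (b) $|\mathbf{I}_{n,k}(010)|=|\mathbf{I}_{n-1}(010)|-(n-2-k)\,|\mathbf{I}_{n-2,k}(010)|$. (c) For $k<n-1$, $|\mathbf{I}_{n,k}(011)|=|\mathbf{I}_{n-1}(011)|-\sum_{j<k}|\mathbf{I}_{n-2,j}(011)|$, and $|\mathbf{I}_{n,n-1}(011)|=|\mathbf{I}_{n-1}(011)|$. (d) $|\mathbf{I}_{n,k}(101)|=|\mathbf{I}_{n-1}(101)|-k\,|\mathbf{I}_{n-2,k}(101)|$.
   Context: An inversion sequence of length $n$ is an integer sequence $e=e_1\dots e_n$ with $0\le e_i<i$ for all $i$; $\mathbf{I}_n$ denotes the set of these. The reduction of an integer word replaces every occurrence of its $i$-th smallest distinct value by $i-1$. $e$ contains the consecutive pattern $p$ of length 3 if some $e_ie_{i+1}e_{i+2}$ has reduction $p$, and avoids it otherwise; $\mathbf{I}_n(p)$ is the set of $e\in\mathbf{I}_n$ avoiding $p$. $\mathbf{I}_{n,k}(p)=\{e\in\mathbf{I}_n(p):e_n=k\}$, empty for $k\ge n$. Conventions: $|\mathbf{I}_0(p)|=1$ and $|\mathbf{I}_{m,j}(p)|=0$ for $m\le0$; empty sums are $0$. *)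

(* Defs.v *)
From mathcomp Require Import all_boot all_order all_algebra.
Set Implicit Arguments. Unset Strict Implicit. Unset Printing Implicit Defensive.

(* An inversion sequence e_1..e_n (0-indexed here: position i, value <= i). *)
Definition is_invseq (s : seq nat) : bool :=
  all (fun i => nth 0 s i <= i) (iota 0 (size s)).

Definition reduction (w : seq nat) : seq nat :=
  map (fun x => index x (sort leq (undup w))) w.

Definition contains3 (p s : seq nat) : bool :=
  has (fun i => reduction (take 3 (drop i s)) == p) (iota 0 (size s - 2)).

Definition avoids3 (p s : seq nat) : bool := ~~ contains3 p s.

Definition tval (n : nat) (e : n.-tuple 'I_n) : seq nat := map val e.

Definition cntI (p : seq nat) (n : nat) : nat :=
  #|[set e : n.-tuple 'I_n | is_invseq (tval e) && avoids3 p (tval e)]|.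

(* |I_{n,k}(p)|, with the convention |I_{m,j}(p)| = 0 for m <= 0 *)
Definition cntIk (p : seq nat) (n k : nat) : nat :=
  if n is 0 then 0 else
  #|[set e : n.-tuple 'I_n | [&& is_invseq (tval e), avoids3 p (tval e)
                              & nth 0 (tval e) n.-1 == k]]|.

(* Main.v *)
Require Import Defs.
From mathcomp Require Import all_boot all_order all_algebra.
From mathcomp Require Import zify.
Ltac lt_rw h :=
  match type of h with is_true (?a < ?b) =>
   let e1 := constr:(ltn_eqF h) in let e2 := constr:(gtn_eqF h) in
   let e3 := constr:(leqNgt b a) in let e4 := constr:(ltnNge b a) in
   let e5 := constr:(ltnW h) in
   try rewrite e1; try rewrite e2;
   try (rewrite e3 h); try (rewrite e4 e5);
   try rewrite h; try rewrite e5 end.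
Ltac rwall := repeat (match goal with H : is_true (_ < _) |- _ =>
   progress (lt_rw H) end; rewrite ?inE ?eqxx ?leqnn ?orbT ?orbF /=).
Lemma r001 a b c : (reduction [:: a; b; c] == [:: 0; 0; 1]) = (a == b) && (b < c).
Proof.
  rewrite /reduction /sort /=.
  case: (ltngtP a b); case: (ltngtP b c); case: (ltngtP a c); intros.
  all: try (exfalso; lia).
  all: try subst.
  all: rewrite ?inE ?eqxx ?leqnn /=.
  all: rwall.
  all: by rewrite ?eqxx.
Qed.
Lemma r010 a b c : (reduction [:: a; b; c] == [:: 0; 1; 0]) = (a == c) && (a < b).
Proof.
  rewrite /reduction /sort /=.
  case: (ltngtP a b); case: (ltngtP b c); case: (ltngtP a c); intros.
  all: try (exfalso; lia).
  all: try subst.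
  all: rewrite ?inE ?eqxx ?leqnn /=.
  all: rwall.
  all: by rewrite ?eqxx.
Qed.
Lemma r011 a b c : (reduction [:: a; b; c] == [:: 0; 1; 1]) = (a < b) && (b == c).
Proof.
  rewrite /reduction /sort /=.
  case: (ltngtP a b); case: (ltngtP b c); case: (ltngtP a c); intros.
  all: try (exfalso; lia).
  all: try subst.
  all: rewrite ?inE ?eqxx ?leqnn /=.
  all: rwall.
  all: by rewrite ?eqxx.
Qed.
Lemma r101 a b c : (reduction [:: a; b; c] == [:: 1; 0; 1]) = (a == c) && (b < a).
Proof.
  rewrite /reduction /sort /=.
  case: (ltngtP a b); case: (ltngtP b c); case: (ltngtP a c); intros.
  all: try (exfalso; lia).
  all: try subst.
  all: rewrite ?inE ?eqxx ?leqnn /=.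
  all: rwall.
  all: by rewrite ?eqxx.
Qed.


Fixpoint L (n : nat) : seq (seq nat) :=
  if n is m.+1 then [seq rcons s x | s <- L m, x <- iota 0 n] else [:: [::]].

Lemma is_invseq_rcons s x : is_invseq (rcons s x) = is_invseq s && (x <= size s).
Proof.
rewrite /is_invseq size_rcons -addn1 iotaD all_cat /= andbT add0n.
rewrite nth_rcons ltnn eqxx; congr andb.
apply: eq_in_all => i; rewrite mem_iota add0n => /andP [_ hi].
by rewrite nth_rcons hi.
Qed.

Lemma memL n (s : seq nat) : (s \in L n) = (size s == n) && is_invseq s.
Proof.
elim: n s => [|n IH] s.
  by case: s.
case/lastP: s => [|t x].
  apply/negbTE/negP => /allpairsP [[t' x'] /= [_ _ /(congr1 size)]].
  by rewrite size_rcons.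
apply/idP/idP.
  move/allpairsP=> [[t' x'] /= [ht hx /rcons_inj [-> ->]]].
  move: ht; rewrite IH => /andP [/eqP hs hi].
  by rewrite size_rcons is_invseq_rcons hs eqxx hi /=; move: hx; rewrite inE mem_iota; lia.
rewrite size_rcons is_invseq_rcons eqSS => /andP [hs /andP [hi hx]].
apply/allpairsP; exists (t, x) => /=; split => //.
  by rewrite IH hs hi.
rewrite -(eqP hs) inE mem_iota; lia.
Qed.

Lemma uniqL n : uniq (L n).
Proof.
elim: n => [|n IH] //.
change (uniq [seq rcons s x | s <- L n, x <- iota 0 n.+1]).
apply: allpairs_uniq => //; first exact: iota_uniq.
by move=> [s1 x1] [s2 x2] _ _ /= /rcons_inj [-> ->].
Qed.

Lemma sum_count (T : Type) (P : pred T) l : \sum_(s <- l) (P s : nat) = count P l.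
Proof. by elim: l => [|x l IH]; rewrite ?big_nil ?big_cons //= IH. Qed.

Lemma card_L n (P : pred (seq nat)) :
  #|[set e : n.-tuple 'I_n | is_invseq (Defs.tval e) && P (Defs.tval e)]| = \sum_(s <- L n) P s.
Proof.
rewrite sum_count -size_filter cardE.
set S := [set e : n.-tuple 'I_n | _].
have tinj : injective (@Defs.tval n).
  move=> e1 e2 h; apply: val_inj; exact: (inj_map val_inj h).
rewrite -(size_map (@Defs.tval n)).
apply: perm_size; apply: uniq_perm.
- rewrite map_inj_uniq //; exact: enum_uniq.
- by rewrite filter_uniq // uniqL.
move=> s; apply/mapP/idP.
  move=> [e]; rewrite mem_enum inE => /andP [hi hp] ->.
  by rewrite mem_filter hp memL hi /Defs.tval size_map size_tuple eqxx.
rewrite mem_filter memL => /and3P [hp /eqP hs hi].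
have hall : all (fun x => x < n) s.
  apply/allP => x /(nthP 0) [i hi' <-].
  move: hi => /allP /(_ i); rewrite mem_iota add0n hi' => /(_ isT) h.
  by apply: leq_ltn_trans h _; rewrite -hs.
have hts : size (pmap (insub : nat -> option 'I_n) s) == n.
  by move: hall; rewrite size_pmap_sub all_count hs.
have htv : Defs.tval (Tuple hts) = s.
  rewrite /Defs.tval /= (pmap_filter (@insubK _ _ _)).
  transitivity [seq x <- s | x < n]; last by rewrite (all_filterP hall).
  by apply: eq_filter => x /=; case: insubP => [u hu _|hn] /=; [rewrite hu|rewrite (negbTE hn)].
exists (Tuple hts); last by rewrite htv.
by rewrite mem_enum inE htv hi hp.
Qed.


Definition bad (p s : seq nat) (k : nat) :=
  (1 < size s) && (reduction (rcons (drop (size s - 2) s) k) == p).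

Lemma contains3_rcons p s k : contains3 p (rcons s k) = contains3 p s || bad p s k.
Proof.
rewrite /contains3 /bad size_rcons.
case: (ltnP 1 (size s)) => hs /=; last first.
  have -> : (size s).+1 - 2 = 0 by lia.
  have -> : size s - 2 = 0 by lia.
  by [].
have -> : (size s).+1 - 2 = (size s - 2) + 1 by lia.
rewrite iotaD add0n has_cat /= orbF.
congr orb.
  apply: eq_in_has => i; rewrite mem_iota add0n => /andP [_ hi].
  rewrite drop_rcons; last lia.
  by rewrite -cats1 takel_cat // size_drop; lia.
rewrite drop_rcons; last lia.
by rewrite take_oversize // size_rcons size_drop; lia.
Qed.

Lemma avoids_rcons p s k : avoids3 p (rcons s k) = avoids3 p s && ~~ bad p s k.
Proof. by rewrite /avoids3 contains3_rcons negb_or. Qed.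

Lemma bad_rcons2 p u a y k : bad p (rcons (rcons u a) y) k = (reduction [:: a; y; k] == p).
Proof.
rewrite /bad !size_rcons.
have -> : (size u).+2 - 2 = size u by lia.
by rewrite -!cats1 -catA drop_size_cat.
Qed.

Lemma bad_rcons1 p a y : bad p [:: a] y = false.
Proof. by []. Qed.

Lemma bad_short p s k : size s <= 1 -> bad p s k = false.
Proof. by rewrite /bad leqNgt => /negbTE ->. Qed.

Lemma sum_iotaS N (F : nat -> nat) :
  \sum_(x <- iota 0 N.+1) F x = \sum_(x <- iota 0 N) F x + F N.
Proof. by rewrite -addn1 iotaD big_cat big_seq1 add0n. Qed.

Lemma sum_pick N k (P : nat -> bool) :
  \sum_(x <- iota 0 N) ((x == k) && P x) = (k < N) && P k.
Proof.
elim: N => [|N IH]; first by rewrite big_nil.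
rewrite sum_iotaS IH.
case: (ltngtP k N) => h.
- by rewrite /= addn0 ltnS (ltnW h).
- have h1 : (k < N.+1) = false by lia.
  by rewrite h1.
- by subst; rewrite /= ltnSn.

Qed.

Lemma sum_lt N a : a <= N -> \sum_(x <- iota 0 N) (x < a) = a.
Proof.
elim: N a => [|N IH] a h; first by rewrite big_nil; lia.
rewrite sum_iotaS.
case: (ltnP N a) => h1.
  have -> : a = N.+1 by lia.
  rewrite -[RHS]addn1; congr addn.
  rewrite -[RHS](IH N) // big_seq [RHS]big_seq.
  apply: eq_bigr => x; rewrite mem_iota => /andP [_ hx].
  have -> : x < N.+1 by lia.
  by have -> : x < N by lia.
by rewrite IH // addn0.
Qed.

Lemma sum_gt N a : a < N -> \sum_(x <- iota 0 N) (a < x) = N - a.+1.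
Proof.
elim: N => [|N IH] h; first by [].
rewrite sum_iotaS.
case: (ltnP a N) => h1.
  rewrite IH // /=; lia.
have -> : a = N by lia.
have -> : \sum_(x <- iota 0 N) (N < x) = 0.
  rewrite big_seq big1 // => x; rewrite mem_iota => /andP [_ hx]; lia.
by rewrite subnn.
Qed.

Definition A p n := \sum_(s <- L n) (avoids3 p s : nat).
Definition B p n k := \sum_(s <- L n) ((avoids3 p s && (last 0 s == k)) : nat).
Definition Bad p n k := \sum_(s <- L n) ((avoids3 p s && bad p s k) : nat).

Lemma sumL n (F : seq nat -> nat) :
  \sum_(s <- L n.+1) F s = \sum_(t <- L n) \sum_(x <- iota 0 n.+1) F (rcons t x).
Proof.
change (\sum_(s <- [seq rcons s x | s <- L n, x <- iota 0 n.+1]) F s =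
  \sum_(t <- L n) \sum_(x <- iota 0 n.+1) F (rcons t x)).
by rewrite big_allpairs_dep.
Qed.

Lemma step p m k : k <= m -> B p m.+1 k + Bad p m k = A p m.
Proof.
move=> hk; rewrite /B /Bad /A sumL -big_split.
apply: eq_bigr => t _.
under eq_bigr => x _ do rewrite last_rcons andbC.
rewrite (sum_pick _ _ (fun x => avoids3 p (rcons t x))) ltnS hk /= avoids_rcons.
by case: (avoids3 p t); case: (bad p t k).
Qed.

Lemma Bad_small p m k : m <= 1 -> Bad p m k = 0.
Proof.
move=> hm; rewrite /Bad big_seq big1 // => s; rewrite memL => /andP [/eqP hs _].
by rewrite bad_short ?andbF //; rewrite hs.
Qed.

Lemma lastL m t : 0 < m -> t \in L m -> last 0 t < m.
Proof.
move=> hm; rewrite memL => /andP [/eqP hs hi].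
rewrite -nth_last hs.
move: hi => /allP /(_ m.-1); rewrite mem_iota add0n hs.
have -> : m.-1 < m by lia.
move=> /(_ isT) h; lia.
Qed.

Lemma bad_step p m k :
  (forall z a y k, reduction [:: z; a; y] == p -> (reduction [:: a; y; k] == p) = false) ->
  0 < m ->
  Bad p m.+1 k = \sum_(t <- L m) (avoids3 p t * \sum_(y <- iota 0 m.+1) (reduction [:: last 0 t; y; k] == p)).
Proof.
move=> novl hm; rewrite /Bad sumL big_seq [RHS]big_seq.
apply: eq_bigr => t; rewrite memL => /andP [/eqP hs _].
rewrite big_distrr /=; apply: eq_bigr => y _.
case/lastP: t hs => [|u a] hs; first by rewrite -hs in hm.
rewrite bad_rcons2 avoids_rcons last_rcons.
case/lastP: u hs => [|w z] hs.
  by rewrite [rcons [::] a]/= bad_rcons1 andbT mulnb.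
rewrite bad_rcons2.
case h1 : (reduction [:: z; a; y] == p).
  by rewrite (novl _ _ _ _ h1) !andbF muln0.
by rewrite andbT; case: (avoids3 p _); case: (_ == p).
Qed.


Lemma cntI_A p m : cntI p m = A p m.
Proof. by rewrite /cntI card_L. Qed.

Lemma cntIk_B p m k : cntIk p m.+1 k = B p m.+1 k.
Proof.
rewrite /cntIk /B -card_L; apply: eq_card => e; rewrite !inE.
have hs : size (Defs.tval e) = m.+1 by rewrite /Defs.tval size_map size_tuple.
by rewrite -nth_last hs.
Qed.

Lemma cntIk_big p m k : m <= k -> cntIk p m k = 0.
Proof.
case: m => [|m] // hk; rewrite cntIk_B /B big_seq big1 // => s hs.
have := @lastL _ _ (ltn0Sn m) hs.
by case: (last 0 s =P k) => [->|]; [lia| rewrite andbF].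
Qed.

Lemma ord_pick k (a : nat) (c : bool) : \sum_(j < k) ((c && (a == j)) : nat) = c && (a < k).
Proof.
rewrite -(big_mkord xpredT (fun j => ((c && (a == j)) : nat))) /index_iota subn0.
under eq_bigr => j _ do rewrite eq_sym andbC.
by rewrite (sum_pick _ _ (fun _ => c)) andbC.
Qed.

Lemma novl001 : forall z a y k, reduction [:: z; a; y] == [:: 0; 0; 1] ->
  (reduction [:: a; y; k] == [:: 0; 0; 1]) = false.
Proof. move=> z a y k; rewrite !r001 => /andP [_ h]; by rewrite (ltn_eqF h). Qed.
Lemma novl010 : forall z a y k, reduction [:: z; a; y] == [:: 0; 1; 0] ->
  (reduction [:: a; y; k] == [:: 0; 1; 0]) = false.
Proof. move=> z a y k; rewrite !r010 => /andP [/eqP -> h]; by rewrite ltnNge (ltnW h) andbF. Qed.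
Lemma novl011 : forall z a y k, reduction [:: z; a; y] == [:: 0; 1; 1] ->
  (reduction [:: a; y; k] == [:: 0; 1; 1]) = false.
Proof. move=> z a y k; rewrite !r011 => /andP [_ /eqP ->]; by rewrite ltnn. Qed.
Lemma novl101 : forall z a y k, reduction [:: z; a; y] == [:: 1; 0; 1] ->
  (reduction [:: a; y; k] == [:: 1; 0; 1]) = false.
Proof. move=> z a y k; rewrite !r101 => /andP [/eqP -> h]; by rewrite ltnNge (ltnW h) andbF. Qed.

Lemma sum_cntIk p m' k : 0 < m' ->
  \sum_(j < k) cntIk p m' j = \sum_(t <- L m') (avoids3 p t * (last 0 t < k)).
Proof.
case: m' => [|m'] // _.
rewrite (eq_bigr (fun j : 'I_k => B p m'.+1 j)); last by move=> j _; rewrite cntIk_B.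
rewrite /B.
rewrite exchange_big /=; apply: eq_bigr => t _.
by rewrite ord_pick mulnb.
Qed.

Lemma thm_a m k : k <= m ->
  cntIk [:: 0; 0; 1] m.+1 k + \sum_(j < k) cntIk [:: 0; 0; 1] m.-1 j = cntI [:: 0; 0; 1] m.
Proof.
move=> hk; rewrite cntIk_B cntI_A -(step _ _ _ hk); congr addn.
case: (leqP m 1) => hm.
  rewrite Bad_small // big1 // => j _.
  by case: m hm {hk} => [|[|]].
case: m hm hk => [|m'] // hm hk.
rewrite (bad_step _ _ _ novl001); last lia.
rewrite sum_cntIk; last lia.
rewrite big_seq [RHS]big_seq; apply: eq_bigr => t ht; congr muln.
under eq_bigr => y _ do rewrite r001 eq_sym.
rewrite (sum_pick _ _ (fun y => y < k)).
have hl : last 0 t < m' by apply: lastL ht; lia.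
by rewrite ltnS (ltnW hl).
Qed.

Lemma thm_b m k : k <= m ->
  cntIk [:: 0; 1; 0] m.+1 k + (m.-1 - k) * cntIk [:: 0; 1; 0] m.-1 k = cntI [:: 0; 1; 0] m.
Proof.
move=> hk; rewrite cntIk_B cntI_A -(step _ _ _ hk); congr addn.
case: (leqP m 1) => hm.
  rewrite Bad_small //.
  by case: m hm {hk} => [|[|]].
case: m hm hk => [|[|m']] // hm hk.
rewrite (bad_step _ _ _ novl010); last lia.
rewrite [m'.+2.-1]/= cntIk_B /B big_distrr big_seq [RHS]big_seq; apply: eq_bigr => t ht.
under eq_bigr => y _ do rewrite r010 -mulnb.
rewrite -big_distrr.
have hl : last 0 t < m'.+1 by apply: (@lastL _ _ _ ht).
rewrite sum_gt; last lia.
case: eqP => [->|_]; case: (avoids3 _ t) => /=; lia.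
Qed.

Lemma thm_c1 m k : k < m ->
  cntIk [:: 0; 1; 1] m.+1 k + \sum_(j < k) cntIk [:: 0; 1; 1] m.-1 j = cntI [:: 0; 1; 1] m.
Proof.
move=> hk; rewrite cntIk_B cntI_A -(step _ _ _ (ltnW hk)); congr addn.
case: (leqP m 1) => hm.
  rewrite Bad_small // big1 // => j _.
  by case: m hm {hk} => [|[|]].
case: m hm hk => [|m'] // hm hk.
rewrite (bad_step _ _ _ novl011); last lia.
rewrite sum_cntIk; last lia.
rewrite big_seq [RHS]big_seq; apply: eq_bigr => t ht; congr muln.
under eq_bigr => y _ do rewrite r011 andbC.
rewrite (sum_pick _ _ (fun y => last 0 t < y)).
by rewrite hk.
Qed.

Lemma thm_c2 m :
  cntIk [:: 0; 1; 1] m.+1 m = cntI [:: 0; 1; 1] m.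
Proof.
rewrite cntIk_B cntI_A -(step _ _ _ (leqnn m)).
case: (leqP m 1) => hm.
  by rewrite Bad_small // addn0.
case: m hm => [|m'] // hm.
rewrite (bad_step _ _ _ novl011); last lia.
rewrite big1 ?addn0 // => t _.
under eq_bigr => y _ do rewrite r011 andbC.
by rewrite (sum_pick _ _ (fun y => last 0 t < y)) ltnn muln0.
Qed.

Lemma thm_d m k : k <= m ->
  cntIk [:: 1; 0; 1] m.+1 k + k * cntIk [:: 1; 0; 1] m.-1 k = cntI [:: 1; 0; 1] m.
Proof.
move=> hk; rewrite cntIk_B cntI_A -(step _ _ _ hk); congr addn.
case: (leqP m 1) => hm.
  rewrite Bad_small //.
  by case: m hm {hk} => [|[|]] //; rewrite muln0.
case: m hm hk => [|[|m']] // hm hk.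
rewrite (bad_step _ _ _ novl101); last lia.
rewrite [m'.+2.-1]/= cntIk_B /B big_distrr big_seq [RHS]big_seq; apply: eq_bigr => t ht.
under eq_bigr => y _ do rewrite r101 -mulnb.
rewrite -big_distrr.
have hl : last 0 t < m'.+1 by apply: (@lastL _ _ _ ht).
rewrite sum_lt; last lia.
case: eqP => [->|_]; case: (avoids3 _ t) => /=; lia.
Qed.

Import GRing.Theory Num.Theory.
Local Open Scope ring_scope.

Lemma sumz k (f : nat -> nat) : ((\sum_(j < k) f j)%N)%:Z = \sum_(j < k) (f j)%:Z.
Proof. by rewrite (big_morph Posz PoszD (erefl 0%:Z)). Qed.

Theorem mainTheorem16 (n k : nat) (hn : (1 <= n)%N) (hk : (k < n)%N) :
  [/\ (cntIk [:: 0; 0; 1]%N n k)%:Z =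
        (cntI [:: 0; 0; 1]%N n.-1)%:Z
        - \sum_(j < k) (cntIk [:: 0; 0; 1]%N n.-2 j)%:Z,
      (cntIk [:: 0; 1; 0]%N n k)%:Z =
        (cntI [:: 0; 1; 0]%N n.-1)%:Z
        - (n%:Z - 2 - k%:Z) * (cntIk [:: 0; 1; 0]%N n.-2 k)%:Z,
      ((k < n.-1)%N ->
        (cntIk [:: 0; 1; 1]%N n k)%:Z =
        (cntI [:: 0; 1; 1]%N n.-1)%:Z
        - \sum_(j < k) (cntIk [:: 0; 1; 1]%N n.-2 j)%:Z)
      /\ cntIk [:: 0; 1; 1]%N n n.-1 = cntI [:: 0; 1; 1]%N n.-1
    & (cntIk [:: 1; 0; 1]%N n k)%:Z =
        (cntI [:: 1; 0; 1]%N n.-1)%:Z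
        - k%:Z * (cntIk [:: 1; 0; 1]%N n.-2 k)%:Z].
Proof.
case: n hn hk => [|m] // _ hk.
have hk' : (k <= m)%N by [].
rewrite [m.+1.-1]/= [m.+1.-2]/=.
split.
- by rewrite -(thm_a _ _ hk') PoszD sumz addrK.
- rewrite -(thm_b _ _ hk') PoszD PoszM.
  have -> : (m.+1%:Z - 2 - k%:Z) * (cntIk [:: 0; 1; 0] m.-1 k)%:Z
          = ((m.-1 - k)%N)%:Z * (cntIk [:: 0; 1; 0] m.-1 k)%:Z.
    case: (ltnP k m) => hkm.
      congr (_ * _); move: hkm; rewrite -subn1; lia.
    by rewrite cntIk_big ?mulr0 //; lia.
  by rewrite addrK.
- split; last exact: thm_c2.
  by move=> hkm; rewrite -(thm_c1 _ _ hkm) PoszD sumz addrK.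
- by rewrite -(thm_d _ _ hk') PoszD PoszM addrK.
Qed.
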